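(* Let $a\ge b\ge1$ and $k$ be integers with $a+b+1\le k\le2a+b$. Then for every $(i,j)\in\overline{Q}_2$: - if $a+b+1\le k\le a+2b-1$, then $w_6\in\mathcal{R}^k_{(a,b),(i,j)}$; - if $a\ne b$ and $a+2b\le k\le2a+b$, then $w_1\in\mathcal{R}^k_{(a,b),(i,j)}$; - if $a\ne b$ and $k=a+2b$, then $w_4\in\mathcal{R}^k_{(a,b),(i,j)}$.
   Context: $\widehat{\mathfrak{su}}(3)_k$ fusion. Let $P_+^k=\{(\lambda_1,\lambda_2)\in\mathbb{Z}_{\ge0}^2:\lambda_1+\lambda_2\le k\}$. For $\lambda,\mu,\nu\in P_+^k$ set - $\mathcal{A}=\tfrac13[2(\lambda_1+\mu_1+\nu_2)+\lambda_2+\mu_2+\nu_1]$, - $\mathcal{B}=\tfrac13[\lambda_1+\mu_1+\nu_2+2(\lambda_2+\mu_2+\nu_1)]$, - $k_0^{\max}=\min(\mathcal{A},\mathcal{B})$, - $k_0^{\min}=\max(\lambda_1+\lambda_2,\mu_1+\mu_2,\nu_1+\nu_2,\mathcal{A}-\lambda_1,\mathcal{A}-\mu_1,\mathcal{A}-\nu_2,\mathcal{B}-\lambda_2,\mathcal{B}-\mu_2,\mathcal{B}-\nu_1)$. The fusion multiplicity is $N^{(k)\nu}_{\lambda,\mu}=\min(k_0^{\max},k)-k_0^{\min}+1$ if $\mathcal{A},\mathcal{B}$ are nonnegative integers, $k_0^{\max}\ge k_0^{\min}$ and $k\ge k_0^{\min}$; otherwise it is $0$. The set $\mathcal{R}^k_{\lambda,\mu}$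 is $\{\nu\in P_+^k:N^{(k)\nu}_{\lambda,\mu}\ne0\}$. The candidate weights are $w_1=(a-1,b+2)$, $w_2=(a+2,b-1)$, $w_3=(a+1,b-2)$, $w_4=(a-2,b+1)$, $w_5=(a+1,b+1)$, $w_6=(a-1,b-1)$. The set $\overline{Q}_2$ is defined by $\overline{Q}_2=\{(k-a+l,k-a-2l):l\in\mathbb{Z},\ \max(1,k-2a)\le l\le\min(k-a-b,\lfloor(k-a)/2\rfloor,b)\}$. *)

(* Defs.v *)
From HB Require Import structures.
From mathcomp Require Import all_boot all_order all_algebra.
Set Implicit Arguments. Unset Strict Implicit. Unset Printing Implicit Defensive.
Import Order.TTheory GRing.Theory Num.Theory.
Local Open Scope ring_scope.

(* Weights of su(3) are pairs of integers (l1, l2). *)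
Definition wt := (int * int)%type.

Definition inPk (k : int) (l : wt) : bool :=
  [&& 0 <= l.1, 0 <= l.2 & l.1 + l.2 <= k].

Definition cA (l m n : wt) : rat :=
  ((2 * (l.1 + m.1 + n.2) + l.2 + m.2 + n.1)%:~R) / 3%:R.
Definition cB (l m n : wt) : rat :=
  (((l.1 + m.1 + n.2) + 2 * (l.2 + m.2 + n.1))%:~R) / 3%:R.

Definition k0max (l m n : wt) : rat := Num.min (cA l m n) (cB l m n).

Definition k0min (l m n : wt) : rat :=
  let A := cA l m n in let B := cB l m n in
  Num.max ((l.1 + l.2)%:~R)
  (Num.max ((m.1 + m.2)%:~R)
  (Num.max ((n.1 + n.2)%:~R)
  (Num.max (A - l.1%:~R)
  (Num.max (A - m.1%:~R)
  (Num.max (A - n.2%:~R)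
  (Num.max (B - l.2%:~R)
  (Num.max (B - m.2%:~R) (B - n.1%:~R)))))))).

Definition fusion (k : int) (l m n : wt) : rat :=
  if [&& cA l m n \is a Num.nat, cB l m n \is a Num.nat,
         k0min l m n <= k0max l m n & k0min l m n <= k%:~R]
  then Num.min (k0max l m n) k%:~R - k0min l m n + 1
  else 0.

Definition fusionR (k : int) (l m : wt) : pred wt :=
  [pred n | inPk k n && (fusion k l m n != 0)].

Definition Q2bar (k a b : int) (p : wt) : Prop :=
  exists l : int,
    [/\ Num.max 1 (k - 2 * a) <= l,
        l <= Num.min (k - a - b) (Num.min ((k - a) %/ 2)%Z b)
      & p = (k - a + l, k - a - 2 * l)].

(* Main.v *)
Require Import Defs.
From HB Require Import structures.
From mathcomp Require Import all_boot all_order all_algebra.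
From mathcomp Require Import zify ring lra.
Import Order.TTheory GRing.Theory Num.Theory.
Local Open Scope ring_scope.

Lemma div3 (X : int) : (((3 * X)%:~R : rat) / 3%:R) = X%:~R.
Proof. rewrite intrM mulrAC divff ?mul1r //. Qed.

Lemma cA_eq (l m n : wt) X : 2*(l.1+m.1+n.2)+l.2+m.2+n.1 = 3*X -> cA l m n = X%:~R.
Proof. by move=> h; rewrite /cA h div3. Qed.
Lemma cB_eq (l m n : wt) X : (l.1+m.1+n.2)+2*(l.2+m.2+n.1) = 3*X -> cB l m n = X%:~R.
Proof. by move=> h; rewrite /cB h div3. Qed.

Lemma natz (X : int) : 0 <= X -> (X%:~R : rat) \is a Num.nat.
Proof. by case: X => // n _; exact: natr_nat. Qed.

Lemma fusion_nz k (l m n : wt) (A B : int) :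
  cA l m n = A%:~R -> cB l m n = B%:~R -> 0 <= A -> 0 <= B ->
  let P t := t <= A /\ t <= B /\ t <= k in
  P (l.1 + l.2) -> P (m.1 + m.2) -> P (n.1 + n.2) -> P (A - l.1) -> P (A - m.1) ->
  P (A - n.2) -> P (B - l.2) -> P (B - m.2) -> P (B - n.1) ->
  fusion k l m n != 0.
Proof.
move=> hA hB A0 B0 P h1 h2 h3 h4 h5 h6 h7 h8 h9.
have H : k0min l m n <= Num.min (k0max l m n) k%:~R.
  rewrite /k0min /k0max hA hB -!intrB !ge_max !le_min !ler_int.
  rewrite /P in h1 h2 h3 h4 h5 h6 h7 h8 h9.
  repeat (apply/andP; split); lia.
move: H; rewrite le_min => /andP[H1 H2].
rewrite /fusion hA hB !natz // H1 H2 /=.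
apply/eqP => E.
have : k0min l m n <= Num.min (k0max l m n) k%:~R by rewrite le_min H1 H2.
lra.
Qed.

Theorem mainTheorem10 (a b k : int) :
  1 <= b -> b <= a -> a + b + 1 <= k -> k <= 2 * a + b ->
  forall i j : int, Q2bar k a b (i, j) ->
  [/\ (a + b + 1 <= k -> k <= a + 2 * b - 1 ->
         (a - 1, b - 1) \in fusionR k (a, b) (i, j)),
      (a != b -> a + 2 * b <= k -> k <= 2 * a + b ->
         (a - 1, b + 2) \in fusionR k (a, b) (i, j))
    & (a != b -> k = a + 2 * b ->
         (a - 2, b + 1) \in fusionR k (a, b) (i, j))].
Proof.
move=> hb hba hk1 hk2 i j [l [Hl1 Hl2 [-> ->]]].
move: Hl1 Hl2; rewrite ge_max le_min le_min => /andP[L1 L2] /andP[L3 /andP[L4 L5]].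
have L4' : 2 * l <= k - a.
  have := divz_eq (k - a) 2; have := modz_ge0 (k - a) (isT : (2:int) != 0).
  have := ltz_pmod (k - a) (isT : (0:int) < 2). lia.
split.
- move=> _ hk; rewrite inE /= /inPk /=; apply/andP; split; first (apply/andP; split; [lia|apply/andP; split; lia]).
  apply: (@fusion_nz _ _ _ _ (k+b-1) (k+b-1-l)); rewrite /=; try (apply: cA_eq || apply: cB_eq); rewrite /=; lia.
- move=> /eqP hab _ _; rewrite inE /= /inPk /=; apply/andP; split; first (apply/andP; split; [lia|apply/andP; split; lia]).
  apply: (@fusion_nz _ _ _ _ (k+b+1) (k+b-l)); rewrite /=; try (apply: cA_eq || apply: cB_eq); rewrite /=; lia.
- move=> /eqP hab hk; rewrite inE /= /inPk /=; apply/andP; split; first (apply/andP; split; [lia|apply/andP; split; lia]).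
  apply: (@fusion_nz _ _ _ _ (k+b) (k+b-1-l)); rewrite /=; try (apply: cA_eq || apply: cB_eq); rewrite /=; lia.
Qed.
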